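(* Fix $K$ and let $(\hat Z_K,\hat J_K)$ be a solution of $$\min_{Z\in\mathcal M_{n,K},\,J}\Big\{\sum_{k,l=1}^K\big\|A^{(k,l)}(Z,K)-\Pi_{(1)}\big(\Pi_{J^{(k,l)}}(A^{(k,l)}(Z,K))\big)\big\|_F^2+\mathrm{Pen}(n,J,K)\Big\},$$ where $J$ ranges over sparsity families for $(Z,K)$. Suppose that either $\mathrm{Pen}(n,J,K)$ is an increasing function of $|J|$ (non-separable penalty), or $\mathrm{Pen}$ is separable and increasing in each $|J_{k,l}|$, $k,l=1,\dots,K$. Then, writing $\hat J=\hat J_K$, $$\hat J_{k,l}(\hat Z_K,K)\subseteq\breve J_{k,l}(\hat Z_K,K)\subseteq(\breve J_* )_{k,l}(\hat Z_K,K)\quad\text{for all }k,l,$$ and $\hat J(\hat Z_K,K)\subseteq\breve J(\hat Z_K,K)\subseteq\breve J_*(\hat Z_K,K)$.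
   Context: $A\in\{0,1\}^{n\times n}$ symmetric, $A_{ij}\sim\mathrm{Bernoulli}((P_* )_{ij})$ independent for $i\le j$, $P_*$ symmetric. $\mathcal M_{n,K}$: clustering matrices $Z\in\{0,1\}^{n\times K}$ (one $1$ per row) assigning node $i$ to community $\mathcal N_k$ iff $Z_{ik}=1$, sizes $n_k$. For $B\in\mathbb R^{n\times n}$, $B^{(k,l)}(Z,K)\in\mathbb R^{n_k\times n_l}$ is the submatrix with rows indexed by $\mathcal N_k$ and columns by $\mathcal N_l$ (after reordering nodes by community). A sparsity family for $(Z,K)$ is $J=(J_{k,l})_{k,l=1}^K$ with $J_{k,l}\subseteq\mathcal N_k$; $J^{(k,l)}=J_{k,l}\times J_{l,k}$; $|J|=\sum_{k,l}|J_{k,l}|$; inclusions between families are meant componentwise. $\Pi_{J^{(k,l)}}(X)$ sets entries outside $J^{(k,l)}$ to zero and $\Pi_{(1)}(X)$ is the best rank-one approximation. A penalty is separable if $\mathrm{Pen}(n,J,K)=\sum_{k,l=1}^K\mathscr F(|J_{k,l}|,n_k)+\mathrm{Pen}^{(1)}(n,K)$ for some functions $\mathscr F,\mathrm{Pen}^{(1)}$; otherwise non-separable. $\breve J_{k,l}(Z,K)=\{i\in\mathcal N_k:A^{(k,l)}_{ij}(Z,K)\ne0\text{ for some }j\}$ and $(\breve J_* )_{k,l}(Z,K)=\{i\in\mathcal N_k:(P_* )^{(k,l)}_{ij}(Z,K)\ne0\text{ for some }j\}$; $\breve J$, $\breve J_*$ denote the corresponding families. *)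

(* Defs.v *)
From HB Require Import structures.
From mathcomp Require Import all_boot all_order all_algebra.
From mathcomp Require Import reals.
Set Implicit Arguments. Unset Strict Implicit. Unset Printing Implicit Defensive.
Import Order.TTheory GRing.Theory Num.Theory.
Local Open Scope ring_scope.

Section Defs.
Variable R : realType.

Definition is_clustering n K (Z : 'M[bool]_(n, K)) : Prop :=
  forall i : 'I_n, #|[set k | Z i k]| = 1%N.

Definition community n K (Z : 'M[bool]_(n, K)) (k : 'I_K) : {set 'I_n} :=
  [set i | Z i k].

Definition sparsity_family n K (Z : 'M[bool]_(n, K))
    (J : 'I_K -> 'I_K -> {set 'I_n}) : Prop :=
  forall k l, J k l \subset community Z k.

Definition famsize n K (J : 'I_K -> 'I_K -> {set 'I_n}) : nat :=
  (\sum_(k < K) \sum_(l < K) #|J k l|)%N.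

(* Submatrix with rows indexed by S and columns by T, nodes listed in
   increasing order (reordering by community). *)
Definition blk n (B : 'M[R]_n) (S T : {set 'I_n}) : 'M[R]_(#|S|, #|T|) :=
  \matrix_(i, j) B (enum_val i) (enum_val j).

Definition projJ n (S T SJ TJ : {set 'I_n}) (X : 'M[R]_(#|S|, #|T|)) :
    'M[R]_(#|S|, #|T|) :=
  \matrix_(i, j) (if (enum_val i \in SJ) && (enum_val j \in TJ)
                  then X i j else 0).

Definition frob2 p q (X : 'M[R]_(p, q)) : R :=
  \sum_(i < p) \sum_(j < q) X i j ^+ 2.

Definition is_best_rank1 p q (Y M : 'M[R]_(p, q)) : Prop :=
  (\rank M <= 1)%N /\
  forall M' : 'M[R]_(p, q), (\rank M' <= 1)%N -> frob2 (Y - M) <= frob2 (Y - M').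

(* The fit term sum_{k,l} || A^{(k,l)} - Pi_(1)(Pi_{J^{(k,l)}}(A^{(k,l)})) ||_F^2,
   for a given selection pi1 of the best rank-one approximation. *)
Definition fit (pi1 : forall p q, 'M[R]_(p, q) -> 'M[R]_(p, q))
    n K (A : 'M[R]_n) (Z : 'M[bool]_(n, K)) (J : 'I_K -> 'I_K -> {set 'I_n}) : R :=
  \sum_(k < K) \sum_(l < K)
    frob2 (blk A (community Z k) (community Z l)
           - pi1 _ _ (projJ (J k l) (J l k)
                       (blk A (community Z k) (community Z l)))).

(* breve J_{k,l}(Z,K) for a matrix B (B = A gives breve J, B = P_* gives breve J_* ) *)
Definition Jbrev n K (B : 'M[R]_n) (Z : 'M[bool]_(n, K)) (k l : 'I_K) : {set 'I_n} :=
  [set i in community Z k | [exists j in community Z l, B i j != 0]].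

(* Probability of the realization A under independent A_ij ~ Bernoulli(P_ij), i <= j. *)
Definition likelihood n (A P : 'M[R]_n) : R :=
  \prod_(i < n) \prod_(j < n | (i <= j)%N)
     (if A i j == 1 then P i j else 1 - P i j).

End Defs.

(* Main.v *)
Require Import Defs.
From HB Require Import structures.
From mathcomp Require Import all_boot all_order all_algebra.
From mathcomp Require Import reals.
From mathcomp Require Import zify.
Import Order.TTheory GRing.Theory Num.Theory.
Local Open Scope ring_scope.

Lemma sum_ltn_strict (I : finType) (f g : I -> nat) (i0 : I) :
  (forall i, (f i <= g i)%N) -> (f i0 < g i0)%N ->
  (\sum_i f i < \sum_i g i)%N.
Proof.
move=> hle hlt; rewrite (bigD1 i0) //= [X in (_ < X)%N](bigD1 i0) //=.
have : (\sum_(i | i != i0) f i <= \sum_(i | i != i0) g i)%N by apply: leq_sum.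
move: hlt; lia.
Qed.

Lemma sum_ltr_strict (R : numDomainType) (I : finType) (f g : I -> R) (i0 : I) :
  (forall i, f i <= g i) -> f i0 < g i0 ->
  \sum_i f i < \sum_i g i.
Proof.
move=> hle hlt; rewrite (bigD1 i0) //= [X in (_ < X)](bigD1 i0) //=.
apply: ltr_leD => //; exact: ler_sum.
Qed.

Lemma card_comm n K (Z : 'M[bool]_(n, K)) k :
  #|community Z k| = (\sum_(i < n) (Z i k : nat))%N.
Proof.
rewrite /community -sum1_card.
rewrite (eq_bigl (fun i => Z i k)); last by move=> i; rewrite inE.
by rewrite big_mkcond /=; apply: eq_bigr => i _; case: (Z i k).
Qed.

Lemma card_row n K (Z : 'M[bool]_(n, K)) i :
  #|[set k | Z i k]| = (\sum_(k < K) (Z i k : nat))%N.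
Proof.
rewrite -sum1_card.
rewrite (eq_bigl (fun k => Z i k)); last by move=> k; rewrite inE.
by rewrite big_mkcond /=; apply: eq_bigr => k _; case: (Z i k).
Qed.

Lemma sum_comm_card n K (Z : 'M[bool]_(n, K)) :
  is_clustering Z -> (\sum_(k < K) #|community Z k| = n)%N.
Proof.
move=> hZ.
rewrite (eq_bigr (fun k => \sum_(i < n) (Z i k : nat))%N); last by move=> k _; rewrite card_comm.
rewrite exchange_big /=.
rewrite -[n in RHS]card_ord -sum1_card.
apply: eq_bigr => i _.
by rewrite -card_row hZ.
Qed.

Theorem lemma2 (R : realType) (n K : nat)
  (A Pstar : 'M[R]_n)
  (* P_* symmetric with entries in [0,1] *)
  (hPsym : Pstar^T = Pstar)
  (hP01 : forall i j, 0 <= Pstar i j <= 1)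
  (* A symmetric, {0,1}-valued *)
  (hAsym : A^T = A)
  (hA01 : forall i j, A i j = 0 \/ A i j = 1)
  (* A is a realization of positive probability under the Bernoulli model *)
  (hApos : 0 < likelihood A Pstar)
  (* a selection of the best rank-one approximation Pi_(1) *)
  (pi1 : forall p q, 'M[R]_(p, q) -> 'M[R]_(p, q))
  (hpi1 : forall p q (Y : 'M[R]_(p, q)), is_best_rank1 Y (pi1 p q Y))
  (* penalty Pen(n, J, K); n, K fixed; Z is passed since Pen may depend on n_k *)
  (Pen : 'M[bool]_(n, K) -> ('I_K -> 'I_K -> {set 'I_n}) -> R)
  (hPen :
     (exists g : nat -> R,
        (forall a b : nat, (a < b <= K * n)%N -> g a < g b) /\
        (forall Z J, Pen Z J = g (famsize J)))
     \/
     (exists (F : nat -> nat -> R) (Pen1 : R),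
        (forall a b m : nat, (a < b <= m)%N -> F a m < F b m) /\
        (forall Z J, Pen Z J =
           \sum_(k < K) \sum_(l < K) F #|J k l| #|community Z k| + Pen1)))
  (Zh : 'M[bool]_(n, K)) (Jh : 'I_K -> 'I_K -> {set 'I_n})
  (hZh : is_clustering Zh) (hJh : sparsity_family Zh Jh)
  (hmin : forall (Z : 'M[bool]_(n, K)) (J : 'I_K -> 'I_K -> {set 'I_n}),
     is_clustering Z -> sparsity_family Z J ->
     fit pi1 A Zh Jh + Pen Zh Jh <= fit pi1 A Z J + Pen Z J) :
  forall k l : 'I_K,
    Jh k l \subset Jbrev A Zh k l /\ Jbrev A Zh k l \subset Jbrev Pstar Zh k l.
Proof.
have hzero : forall k l (x y : 'I_n), x \in community Zh k -> y \in community Zh l ->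
    x \notin Jbrev A Zh k l -> A x y = 0.
  move=> k l x y hx hy; rewrite /Jbrev inE hx /= negb_exists => /forallP /(_ y).
  by rewrite hy /= negbK => /eqP.
move=> k0 l0; split.
- apply/negPn/negP => hns.
  pose J' := fun k l => Jh k l :&: Jbrev A Zh k l.
  have hJ' : sparsity_family Zh J'.
    by move=> k l; apply: subset_trans (subsetIl _ _) (hJh k l).
  have hfit : fit pi1 A Zh J' = fit pi1 A Zh Jh.
  {
    rewrite /fit; apply: eq_bigr => k _; apply: eq_bigr => l _.
    congr (frob2 (_ - pi1 _ _ _)).
    apply/matrixP => i j; rewrite /projJ /blk !mxE /J' !in_setI.
    have hi := enum_valP i; have hj := enum_valP j.
    case: (enum_val i \in Jh k l); case: (enum_val j \in Jh l k) => //=.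
    case: (boolP (enum_val i \in Jbrev A Zh k l)) => hbi;
    case: (boolP (enum_val j \in Jbrev A Zh l k)) => hbj //=.
    all: try by [].
    all: try by rewrite (hzero k l _ _ hi hj hbi).
    have h := hzero l k _ _ hj hi hbj.
    rewrite -hAsym mxE in h; by rewrite h.
    by rewrite andbF.
  }
  have := hmin Zh J' hZh hJ'; rewrite hfit lerD2l => hle.
  have hsub : forall k l, (#|J' k l| <= #|Jh k l|)%N.
    by move=> k l; apply: subset_leq_card; apply: subsetIl.
  have hlt : (#|J' k0 l0| < #|Jh k0 l0|)%N.
    have := cardsID (Jbrev A Zh k0 l0) (Jh k0 l0).
    have : (0 < #|Jh k0 l0 :\: Jbrev A Zh k0 l0|)%N.
      by rewrite card_gt0 setD_eq0.
    rewrite /J'; lia.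
  have hcomm : forall k l, (#|Jh k l| <= #|community Zh k|)%N.
    by move=> k l; apply: subset_leq_card.
  case: hPen => [[g [hg hPg]] | [F [Pen1 [hF hPF]]]].
  + rewrite !hPg in hle.
    have : g (famsize J') < g (famsize Jh).
      apply: hg; apply/andP; split.
        rewrite /famsize; apply: (@sum_ltn_strict _ _ _ k0) => [k|].
          by apply: leq_sum => l _.
        by apply: (@sum_ltn_strict _ _ _ l0).
      rewrite /famsize -[X in (_ <= K * X)%N](sum_comm_card _ _ _ hZh) big_distrr /=.
      apply: leq_sum => k _.
      apply: (@leq_trans (\sum_(l < K) #|community Zh k|)%N).
        by apply: leq_sum => l _.
      by rewrite sum_nat_const card_ord.
    by rewrite ltNge hle.
  + rewrite !hPF lerD2r in hle.
    have hFle : forall a b m, (a <= b <= m)%N -> F a m <= F b m.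
      move=> a b m /andP [hab hbm]; case: (ltnP a b) => h.
        by apply/ltW/hF; rewrite h.
      by have -> : a = b by apply/eqP; rewrite eqn_leq hab h.
    have : \sum_(k < K) \sum_(l < K) F #|J' k l| #|community Zh k|
         < \sum_(k < K) \sum_(l < K) F #|Jh k l| #|community Zh k|.
      apply: (@sum_ltr_strict _ _ _ _ k0) => [k|].
        by apply: ler_sum => l _; apply: hFle; rewrite hsub hcomm.
      apply: (@sum_ltr_strict _ _ _ _ l0) => [l|].
        by apply: hFle; rewrite hsub hcomm.
      by apply: hF; rewrite hlt hcomm.
    by rewrite ltNge hle.
- apply/subsetP => x; rewrite !inE => /andP [hx /existsP [y /andP [hy hA]]].
  rewrite hx /=; apply/existsP; exists y; rewrite hy /=.
  have hA1 : forall i j, A i j != 0 -> A i j == 1.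
    by move=> i j; case: (hA01 i j) => ->; rewrite ?eqxx.
  have hlik : forall i j : 'I_n, (i <= j)%N -> A i j == 1 -> Pstar i j != 0.
    move=> i j hij h1; apply/negP => /eqP h0.
    move: hApos; rewrite /likelihood (bigD1 i) //= (bigD1 j) //= h1 h0.
    by rewrite !mul0r ltxx.
  case: (leqP x y) => hxy; first by apply: hlik => //; apply: hA1.
  have : Pstar y x != 0.
    apply: hlik; first exact: ltnW.
    apply: hA1; by rewrite -hAsym mxE in hA.
  have e : Pstar^T y x = Pstar y x by rewrite hPsym.
  rewrite mxE in e; by rewrite e.
Qed.
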